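(* Let $a,b,c,d>0$, $\theta>0$ satisfy $-(\theta a+\theta^2 b)<(\theta-1)(\theta+1)^2<\theta c+\theta^2 d$, let $\mu\in(0,1]$, and consider on $\mathcal{I}=[0,1]^2$ the system $$\dot x=x(1-x)\big[xr(-c+d-a+b)+x(a-b)-r(d+b)+b\big]+\mu(1-2x),\qquad \dot r=r(1-r)\big[\theta x-(1-x)\big].$$ Then the system has exactly one equilibrium on the side $\mathcal{B}_b=\{(x,0):x\in[0,1]\}$ and exactly one equilibrium on the side $\mathcal{B}_t=\{(x,1):x\in[0,1]\}$. Moreover, the equilibrium on $\mathcal{B}_b$ lies in $\{(x,0): x\in(\max\{1/2,1/(\theta+1)\},1)\}$ and the equilibrium on $\mathcal{B}_t$ lies in $\{(x,1): x\in(0,\min\{1/2,1/(\theta+1)\})\}$. *)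

(* Defs.v *)
From mathcomp Require Import all_boot all_order all_algebra.
Set Implicit Arguments. Unset Strict Implicit. Unset Printing Implicit Defensive.
Import Order.TTheory GRing.Theory Num.Theory.
Local Open Scope ring_scope.

Definition fx (R : realFieldType) (a b c d mu : R) (x r : R) : R :=
  x * (1 - x) * (x * r * (- c + d - a + b) + x * (a - b) - r * (d + b) + b)
  + mu * (1 - 2 * x).

Definition fr (R : realFieldType) (theta : R) (x r : R) : R :=
  r * (1 - r) * (theta * x - (1 - x)).

Definition is_equilibrium (R : realFieldType) (a b c d theta mu : R) (x r : R) : Prop :=
  fx a b c d mu x r = 0 /\ fr theta x r = 0.

(* Main.v *)
Require Import Defs.
From mathcomp Require Import all_boot all_order all_algebra.
From mathcomp Require Import ring lra.
Import Order.TTheory GRing.Theory Num.Theory.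
Local Open Scope ring_scope.

Section Aux.
Variable R : rcfType.

Definition g (a b mu x : R) := x*(1-x)*(x*a+(1-x)*b) + mu*(1-2*x).

Lemma g_mono {a b x y : R} : 0 < a -> 0 < b -> 1/2 < x -> x < y -> y < 1 ->
  y*(1-y)*(y*a+(1-y)*b)*(2*x-1) < x*(1-x)*(x*a+(1-x)*b)*(2*y-1).
Proof.
move=> ha hb hx hxy hy.
rewrite -subr_gt0.
have -> : x*(1-x)*(x*a+(1-x)*b)*(2*y-1) - y*(1-y)*(y*a+(1-y)*b)*(2*x-1)
  = (y-x)/4 * (b*(1+(2*x-1)*(2*y-1)*(1-(2*x-1)-(2*y-1)))
             + a*(1+(2*x-1)*(2*y-1)*(1+(2*x-1)+(2*y-1)))) by field.
set u := 2*x-1. set v := 2*y-1.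
have hu : 0 < u by rewrite /u; lra.
have hv : 0 < v by rewrite /v; lra.
have hu1 : u < 1 by rewrite /u; lra.
have hv1 : v < 1 by rewrite /v; lra.
have huv : 0 < u*v by apply: mulr_gt0.
have huv1 : u*v < 1 by nra.
apply: mulr_gt0; first by apply: divr_gt0; lra.
have t2 : 0 < a*(1+u*v*(1+u+v)) by apply: mulr_gt0 => //; nra.
have t1 : 0 < b*(1+u*v*(1-u-v)).
  apply: mulr_gt0 => //.
  have : u*v*(u+v-1) < 1.
    case: (lerP (u+v-1) 0) => h; first nra.
    have : u + v - 1 < 1 by lra. nra.
  lra.
lra.
Qed.

Lemma g_pos_low {a b mu y : R} : 0 < a -> 0 < b -> 0 < mu -> 0 <= y -> y <= 1/2 ->
  0 < g a b mu y.
Proof.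
move=> ha hb hmu hy0 hy1; rewrite /g.
have hh : 0 < y*a+(1-y)*b by nra.
have h1 : 0 <= y*(1-y) by nra.
have h2 : 0 <= y*(1-y)*(y*a+(1-y)*b) by apply: mulr_ge0 => //; lra.
case: (ltrP y (1/2)) => h.
  have : 0 < mu*(1-2*y) by apply: mulr_gt0 => //; lra. lra.
have -> : y = 1/2 by lra.
have : 0 < 1/2*(1-1/2)*(1/2*a+(1-1/2)*b) :> R by apply: mulr_gt0; lra.
lra.
Qed.

Lemma core {a b mu m : R} : 0 < a -> 0 < b -> 0 < mu -> 1/2 <= m -> m < 1 ->
  0 < g a b mu m ->
  exists x, m < x < 1 /\ g a b mu x = 0 /\
    forall y, 0 <= y <= 1 -> g a b mu y = 0 -> y = x.
Proof.
move=> ha hb hmu hm1 hm2 hgm.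
pose p : {poly R} := - ('X*(1-'X)*('X*a%:P+(1-'X)*b%:P) + mu%:P*(1-2%:P*'X)).
have pE : forall t, p.[t] = - g a b mu t.
  by move=> t; rewrite /p /g !hornerE.
have g1 : g a b mu 1 = - mu by rewrite /g; ring.
have [x /andP[hx1 hx2] hr] : exists2 x, m <= x <= 1 & root p x.
  apply: poly_ivt; first lra.
  rewrite !pE g1; apply/andP; split; lra.
move/eqP: hr; rewrite pE => /eqP; rewrite oppr_eq0 => /eqP hgx.
have xm : x != m by apply/eqP => e; move: hgm; rewrite -e hgx ltxx.
have x1 : x != 1 by apply/eqP => e; move: hgx; rewrite e g1 => /eqP; rewrite oppr_eq0; move/eqP => e2; move: hmu; rewrite e2 ltxx.
have hx3 : m < x by rewrite lt_neqAle eq_sym xm hx1.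
have hx4 : x < 1 by rewrite lt_neqAle x1 hx2.
exists x; split; first by rewrite hx3 hx4.
split => // y /andP[hy0 hy1] hgy.
have hy2 : 1/2 < y.
  rewrite ltNge; apply/negP => h.
  by move: (g_pos_low ha hb hmu hy0 h); rewrite hgy ltxx.
have hy3 : y < 1.
  rewrite lt_neqAle hy1 andbT; apply/eqP => e; move: hgy; rewrite e g1.
  by move/eqP; rewrite oppr_eq0 => /eqP e2; move: hmu; rewrite e2 ltxx.
have ex : x*(1-x)*(x*a+(1-x)*b) = mu*(2*x-1) by move: hgx; rewrite /g; lra.
have ey : y*(1-y)*(y*a+(1-y)*b) = mu*(2*y-1) by move: hgy; rewrite /g; lra.
have hx5 : 1/2 < x by lra.
case: (ltgtP x y) => // h.
- have := g_mono ha hb hx5 h hy3.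
  rewrite ex ey => H; exfalso.
  move: H; rewrite -mulrA [(2*y-1)*_]mulrC mulrA ltxx //.
- have := g_mono ha hb hy2 h hx4.
  rewrite ex ey => H; exfalso.
  move: H; rewrite -mulrA [(2*x-1)*_]mulrC mulrA ltxx //.
Qed.

End Aux.
Arguments g {R}.
Arguments core {R a b mu m}.

Theorem lemma11 (R : rcfType) (a b c d theta mu : R)
  (ha : 0 < a) (hb : 0 < b) (hc : 0 < c) (hd : 0 < d) (htheta : 0 < theta)
  (hlow : - (theta * a + theta ^+ 2 * b) < (theta - 1) * (theta + 1) ^+ 2)
  (hupp : (theta - 1) * (theta + 1) ^+ 2 < theta * c + theta ^+ 2 * d)
  (hmu0 : 0 < mu) (hmu1 : mu <= 1) :
  (exists x : R,
      Num.max (1 / 2) (1 / (theta + 1)) < x < 1 /\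
      is_equilibrium a b c d theta mu x 0 /\
      (forall y : R, 0 <= y <= 1 -> is_equilibrium a b c d theta mu y 0 -> y = x))
  /\
  (exists x : R,
      0 < x < Num.min (1 / 2) (1 / (theta + 1)) /\
      is_equilibrium a b c d theta mu x 1 /\
      (forall y : R, 0 <= y <= 1 -> is_equilibrium a b c d theta mu y 1 -> y = x)).
Proof.
have ht1 : 0 < theta + 1 by lra.
have ht3 : 0 < (theta + 1) ^+ 3 by apply: exprn_gt0.
have fr0 : forall y, fr theta y 0 = 0 by move=> y; rewrite /fr; ring.
have fr1 : forall y, fr theta y 1 = 0 by move=> y; rewrite /fr; ring.
have fx0 : forall y, fx a b c d mu y 0 = g a b mu y by move=> y; rewrite /fx /g; ring.
have fx1 : forall y, fx a b c d mu y 1 = - g d c mu (1 - y) by move=> y; rewrite /fx /g; ring.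
split.
- have gh : 0 < g a b mu (1/2) by apply: g_pos_low => //; lra.
  have gt : 0 < g a b mu (1/(theta+1)).
    have -> : g a b mu (1/(theta+1)) =
      (theta*(a+theta*b) + mu*(theta-1)*(theta+1)^+2) / (theta+1)^+3.
      rewrite /g; field; lra.
    apply: divr_gt0 => //.
    have hsq : 0 < (theta+1)^+2 by apply: exprn_gt0.
    case: (lerP 1 theta) => h.
      have : 0 <= mu*(theta-1)*(theta+1)^+2 by apply: mulr_ge0 => //; apply: mulr_ge0; lra.
      have : 0 < theta*(a+theta*b) by apply: mulr_gt0 => //; nra.
      lra.
    have : (theta-1)*(theta+1)^+2 <= mu*(theta-1)*(theta+1)^+2.
      rewrite -subr_ge0.
      have -> : mu*(theta-1)*(theta+1)^+2 - (theta-1)*(theta+1)^+2 = ((1-mu)*(1-theta))*(theta+1)^+2 by ring.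
      apply: mulr_ge0; [apply: mulr_ge0|]; lra.
    have -> : theta*(a+theta*b) = theta*a + theta^+2*b by ring.
    lra.
  have hm1 : 1/2 <= Num.max (1/2) (1/(theta+1)) by rewrite le_max lexx.
  have hm2 : Num.max (1/2) (1/(theta+1)) < 1.
    rewrite gt_max; apply/andP; split; first lra.
    by rewrite ltr_pdivrMr // mul1r; lra.
  have hgm : 0 < g a b mu (Num.max (1/2) (1/(theta+1))).
    by case: (leP (1/2) (1/(theta+1))).
  have [x [hx [hgx hu]]] := core ha hb hmu0 hm1 hm2 hgm.
  exists x; split => //; split; first by split; rewrite ?fx0 ?fr0.
  by move=> y hy [hfy _]; apply: hu => //; rewrite -fx0.
- have gh : 0 < g d c mu (1/2) by apply: g_pos_low => //; lra.
  have gt : 0 < g d c mu (theta/(theta+1)).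
    have -> : g d c mu (theta/(theta+1)) =
      (theta*(theta*d+c) + mu*(1-theta)*(theta+1)^+2) / (theta+1)^+3.
      rewrite /g; field; lra.
    apply: divr_gt0 => //.
    have hsq : 0 < (theta+1)^+2 by apply: exprn_gt0.
    case: (lerP theta 1) => h.
      have : 0 <= mu*(1-theta)*(theta+1)^+2 by apply: mulr_ge0 => //; apply: mulr_ge0; lra.
      have : 0 < theta*(theta*d+c) by apply: mulr_gt0 => //; nra.
      lra.
    have : (1-theta)*(theta+1)^+2 <= mu*(1-theta)*(theta+1)^+2.
      rewrite -subr_ge0.
      have -> : mu*(1-theta)*(theta+1)^+2 - (1-theta)*(theta+1)^+2 = ((1-mu)*(theta-1))*(theta+1)^+2 by ring.
      apply: mulr_ge0; [apply: mulr_ge0|]; lra.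
    have -> : theta*(theta*d+c) = theta*c + theta^+2*d by ring.
    lra.
  have hm1 : 1/2 <= Num.max (1/2) (theta/(theta+1)) by rewrite le_max lexx.
  have hm2 : Num.max (1/2) (theta/(theta+1)) < 1.
    rewrite gt_max; apply/andP; split; first lra.
    by rewrite ltr_pdivrMr // mul1r; lra.
  have hgm : 0 < g d c mu (Num.max (1/2) (theta/(theta+1))).
    by case: (leP (1/2) (theta/(theta+1))).
  have [z [hz [hgz hu]]] := core hd hc hmu0 hm1 hm2 hgm.
  have e1 : 1/(theta+1) = 1 - theta/(theta+1) by field; lra.
  exists (1 - z); split.
    move: hz; rewrite gt_max lt_min e1 => /andP[/andP[h1 h2] h3].
    apply/andP; split; first lra.
    apply/andP; split; lra.
  split; first by split; rewrite ?fx1 ?fr1 // subKr hgz oppr0.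
  move=> y hy [hfy _].
  have : 1 - y = z.
    apply: hu; first by case/andP: hy => ? ?; apply/andP; split; lra.
    by move: hfy; rewrite fx1 => /eqP; rewrite oppr_eq0 => /eqP.
  move=> <-; ring.
Qed.
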